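(* Let $R$ be a locally bounded $K$-category, $X\in\mathrm{Mod}(R)$, $M,N\in\mathrm{mod}(R)$, and let $f:M\to N$ and $\alpha:X\to N$ be $R$-homomorphisms. Suppose that $\mathrm{Im}\,\mathrm{Hom}_R( *,\alpha)\subseteq\mathrm{Im}\,\mathrm{Hom}_R( *,f)$ as subfunctors of $\mathrm{Hom}_R( *,N)$ on $\mathrm{mod}(R)$, i.e. for every $L\in\mathrm{mod}(R)$ and every $R$-homomorphism $\gamma:L\to X$ there exists $h:L\to M$ with $\alpha\gamma=fh$. Then $\alpha$ factors through $f$, i.e. $\alpha=f\beta$ for some $R$-homomorphism $\beta:X\to M$.
   Context: $K$ is an algebraically closed field. A $K$-category $R$ is locally bounded if distinct objects are non-isomorphic, endomorphism algebras of objects are local, and for each object $x$, $\sum_y\dim_K R(x,y)<\infty$ and $\sum_y\dim_K R(y,x)<\infty$. An $R$-module is a $K$-linear functor $R^{op}\to\mathrm{Mod}(K)$; $\mathrm{Mod}(R)$ consists of $R$-modules $X$ with $\dim_K X(x)<\infty$ for all objects $x$, and $\mathrm{mod}(R)$ of those with $\sum_x\dim_K M(x)<\infty$. *)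

(* Defs.v *)
From HB Require Import structures.
From mathcomp Require Import all_boot all_algebra.
From Stdlib Require List.
Set Implicit Arguments. Unset Strict Implicit. Unset Printing Implicit Defensive.
Import GRing.Theory.
Local Open Scope ring_scope.

(* A K-linear category whose hom spaces are finite dimensional K-vector
   spaces (locally bounded categories have finite-dimensional hom spaces). *)
Record Kcat (K : fieldType) := {
  Obj : Type;
  Hom : Obj -> Obj -> vectType K;
  comp : forall x y z, Hom y z -> Hom x y -> Hom x z;
  idm : forall x, Hom x x;
  comp_assoc : forall x y z w (h : Hom z w) (g : Hom y z) (f : Hom x y),
    comp h (comp g f) = comp (comp h g) f;
  comp_id_l : forall x y (f : Hom x y), comp (idm y) f = f;
  comp_id_r : forall x y (f : Hom x y), comp f (idm x) = f;
  comp_lin_l : forall x y z (a : K) (g g' : Hom y z) (f : Hom x y),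
    comp (a *: g + g') f = a *: comp g f + comp g' f;
  comp_lin_r : forall x y z (a : K) (g : Hom y z) (f f' : Hom x y),
    comp g (a *: f + f') = a *: comp g f + comp g f'
}.

Arguments comp {K} k {x y z}.
Arguments idm {K} k x.
Arguments Hom {K} k.

Section Defs.
Variables (K : fieldType) (R : Kcat K).

Definition is_iso (x y : Obj R) (f : Hom R x y) : Prop :=
  exists g : Hom R y x, comp R g f = idm R x /\ comp R f g = idm R y.

Definition is_unit_end (x : Obj R) (a : Hom R x x) : Prop := is_iso a.

Definition local_end (x : Obj R) : Prop :=
  idm R x <> 0 /\
  (forall a b : Hom R x x, ~ is_unit_end a -> ~ is_unit_end b -> ~ is_unit_end (a + b)) /\
  (forall a r : Hom R x x, ~ is_unit_end a ->
      ~ is_unit_end (comp R r a) /\ ~ is_unit_end (comp R a r)).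

Definition locally_bounded : Prop :=
  (forall x y : Obj R, x <> y -> forall f : Hom R x y, ~ is_iso f) /\
  (forall x : Obj R, local_end x) /\
  (forall x : Obj R, exists s : seq (Obj R),
     forall y, (\dim {: Hom R x y} != 0)%N -> Stdlib.Lists.List.In y s) /\
  (forall x : Obj R, exists s : seq (Obj R),
     forall y, (\dim {: Hom R y x} != 0)%N -> Stdlib.Lists.List.In y s).

(* Objects of Mod(R): K-linear functors R^op -> Mod(K) with finite
   dimensional values. *)
Record Rmod := {
  sp : Obj R -> vectType K;
  act : forall x y, Hom R x y -> sp y -> sp x;
  act_comp : forall x y z (g : Hom R y z) (f : Hom R x y) (v : sp z),
    act (comp R g f) v = act f (act g v);
  act_id : forall x (v : sp x), act (idm R x) v = v;
  act_lin_v : forall x y (g : Hom R x y) (a : K) (v w : sp y),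
    act g (a *: v + w) = a *: act g v + act g w;
  act_lin_g : forall x y (g g' : Hom R x y) (a : K) (v : sp y),
    act (a *: g + g') v = a *: act g v + act g' v
}.

Arguments act r {x y}.

(* M is in mod(R): sum_x dim M(x) < oo *)
Definition fin_mod (M : Rmod) : Prop :=
  exists s : seq (Obj R), forall x, (\dim {: sp M x} != 0)%N -> Stdlib.Lists.List.In x s.

Definition is_hom (X Y : Rmod) (phi : forall x, sp X x -> sp Y x) : Prop :=
  (forall x (a : K) (v w : sp X x), phi x (a *: v + w) = a *: phi x v + phi x w) /\
  (forall x y (g : Hom R x y) (v : sp X y), phi x (act X g v) = act Y g (phi y v)).

End Defs.

(* Main.v *)
Require Import Defs.
From mathcomp Require Import all_boot all_algebra.
Set Implicit Arguments. Unset Strict Implicit. Unset Printing Implicit Defensive.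
Import GRing.Theory.
Local Open Scope ring_scope.

Notation ac X g v := (@act _ _ X _ _ g v).
Section Aux.
Variables (K : fieldType) (R : Kcat K).

Lemma dimsubvs (vT : vectType K) (U : {vspace vT}) : \dim {: subvs_of U} = \dim U.
Proof. by rewrite dimvf. Qed.

Section ActLemmas.
Variable X : Rmod R.

Lemma act_addg x y (g g' : Defs.Hom R x y) v : ac X (g + g') v = ac X g v + ac X g' v.
Proof. by have := @act_lin_g _ _ X _ _ g g' 1 v; rewrite !scale1r. Qed.
Lemma act0g x y v : ac X (0 : Defs.Hom R x y) v = 0.
Proof.
have H : ac X (0 : Defs.Hom R x y) v + ac X (0 : Defs.Hom R x y) v = ac X (0 : Defs.Hom R x y) v + 0.
  by rewrite -act_addg !addr0.
exact: addrI H.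
Qed.
Lemma act_scaleg x y a (g : Defs.Hom R x y) v : ac X (a *: g) v = a *: ac X g v.
Proof. by have := @act_lin_g _ _ X _ _ g 0 a v; rewrite addr0 act0g addr0. Qed.
Lemma act_addv x y (g : Defs.Hom R x y) v w : ac X g (v + w) = ac X g v + ac X g w.
Proof. by have := @act_lin_v _ _ X _ _ g 1 v w; rewrite !scale1r. Qed.
Lemma act0v x y (g : Defs.Hom R x y) : ac X g 0 = 0.
Proof.
have H : ac X g 0 + ac X g 0 = ac X g 0 + 0 by rewrite -act_addv !addr0.
exact: addrI H.
Qed.
Lemma act_scalev x y a (g : Defs.Hom R x y) v : ac X g (a *: v) = a *: ac X g v.
Proof. by have := @act_lin_v _ _ X _ _ g a v 0; rewrite addr0 act0v addr0. Qed.
Lemma act_sumg x y I r P (F : I -> Defs.Hom R x y) v :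
  ac X (\sum_(i <- r | P i) F i) v = \sum_(i <- r | P i) ac X (F i) v.
Proof. by elim/big_rec2: _ => [|i a b _ <-]; rewrite ?act0g ?act_addg. Qed.
Lemma act_sumv x y (g : Defs.Hom R x y) I r P (F : I -> sp X y) :
  ac X g (\sum_(i <- r | P i) F i) = \sum_(i <- r | P i) ac X g (F i).
Proof. by elim/big_rec2: _ => [|i a b _ <-]; rewrite ?act0v ?act_addv. Qed.

Definition gens (T : seq (Obj R)) z : seq (sp X z) :=
  flatten [seq flatten [seq [seq ac X b u | u <- (vbasis (fullv : {vspace sp X t}) : seq _)]
      | b <- (vbasis (fullv : {vspace Defs.Hom R z t}) : seq _)] | t <- T].

Definition V T z : {vspace sp X z} := <<gens T z>>%VS.

Lemma gens_mem T z t (b : Defs.Hom R z t) u : List.In t T -> b \in (vbasis fullv : seq _) ->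
  u \in (vbasis fullv : seq _) -> ac X b u \in gens T z.
Proof.
rewrite /gens; elim: T => //= t' T' IH [Et | Ht] Hb Hu; rewrite mem_cat; apply/orP.
- left; subst t'; apply/flatten_mapP; exists b => //; exact: map_f.
- by right; apply: IH.
Qed.

Lemma gens_inv T z y : y \in gens T z ->
  exists t (b : Defs.Hom R z t) u, List.In t T /\ y = ac X b u.
Proof.
rewrite /gens; elim: T => //= t' T' IH; rewrite mem_cat => /orP [|/IH].
- move=> /flatten_mapP [b _ /mapP [u _ ->]]; exists t', b, u; split => //; by left.
- move=> [t [b [u [Ht ->]]]]; exists t, b, u; split => //; by right.
Qed.

Lemma gen_in_V T z t (k : Defs.Hom R z t) u : List.In t T -> ac X k u \in V T z.
Proof.
move=> Ht; rewrite (coord_vbasis (memvf k)) (coord_vbasis (memvf u)).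
rewrite act_sumg; apply: rpred_sum => i _; rewrite act_scaleg; apply: rpredZ.
rewrite act_sumv; apply: rpred_sum => j _; rewrite act_scalev; apply: rpredZ.
apply: memv_span; apply: gens_mem => //; apply: mem_nth; by rewrite size_tuple.
Qed.

Lemma V_full T t : List.In t T -> forall u, u \in V T t.
Proof. move=> Ht u; rewrite -(@act_id _ _ X _ u); exact: gen_in_V. Qed.

Lemma V_closed T z x (g : Defs.Hom R z x) w : w \in V T x -> ac X g w \in V T z.
Proof.
move=> Hw; have : w \in <<in_tuple (gens T x)>>%VS by [].
move/coord_span => ->.
rewrite act_sumv; apply: rpred_sum => i _; rewrite act_scalev; apply: rpredZ.
have : (in_tuple (gens T x))`_i \in gens T x by apply: mem_nth; exact: ltn_ord.
move/gens_inv => [t [b [u [Ht ->]]]].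
rewrite -act_comp; exact: gen_in_V.
Qed.

Lemma gens_nz T z : gens T z != [::] ->
  exists t, List.In t T /\ (\dim {: Defs.Hom R z t} != 0)%N.
Proof.
rewrite /gens; elim: T => //= t T IH.
case: (boolP (\dim {: Defs.Hom R z t} == 0)%N) => [/eqP H0|Hn]; last first.
  by move=> _; exists t; split => //; left.
have -> : (vbasis (fullv : {vspace Defs.Hom R z t}) : seq _) = [::].
  by apply: size0nil; rewrite size_tuple.
move=> /= /IH [t' [Ht' Hd]]; exists t'; split => //; by right.
Qed.


Definition Lsp T z := subvs_of (V T z).
Definition Lact T x y (g : Defs.Hom R x y) (v : Lsp T y) : Lsp T x :=
  vsproj (V T x) (ac X g (vsval v)).

Lemma LvalE T x y (g : Defs.Hom R x y) (v : Lsp T y) : vsval (Lact g v) = ac X g (vsval v).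
Proof. by rewrite /Lact vsprojK //; apply: V_closed; exact: subvsP. Qed.

Lemma Lact_comp T x y z (g : Defs.Hom R y z) (f : Defs.Hom R x y) (v : Lsp T z) :
  Lact (Defs.comp R g f) v = Lact f (Lact g v).
Proof. by apply: subvs_inj; rewrite !LvalE act_comp. Qed.
Lemma Lact_id T x (v : Lsp T x) : Lact (idm R x) v = v.
Proof. by apply: subvs_inj; rewrite LvalE act_id. Qed.
Lemma Lact_lin_v T x y (g : Defs.Hom R x y) (a : K) (v w : Lsp T y) :
  Lact g (a *: v + w) = a *: Lact g v + Lact g w.
Proof.
by apply: subvs_inj; rewrite LvalE raddfD /= !LvalE act_lin_v.
Qed.
Lemma Lact_lin_g T x y (g g' : Defs.Hom R x y) (a : K) (v : Lsp T y) :
  Lact (a *: g + g') v = a *: Lact g v + Lact g' v.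
Proof.
by apply: subvs_inj; rewrite LvalE raddfD /= !LvalE act_lin_g.
Qed.

Definition Lmod T : Rmod R :=
  @Build_Rmod K R (Lsp T) (@Lact T) (@Lact_comp T) (@Lact_id T) (@Lact_lin_v T) (@Lact_lin_g T).

End ActLemmas.

Lemma dim0_eq (W : vectType K) (a b : W) : \dim {: W} = 0%N -> a = b.
Proof.
move/eqP; rewrite dimv_eq0 => /eqP H.
have := memvf a; have := memvf b; rewrite H !memv0 => /eqP -> /eqP -> //.
Qed.

Lemma hom0 (X Y : Rmod R) (phi : forall x, sp X x -> sp Y x) : is_hom phi ->
  forall x, phi x 0 = 0.
Proof.
move=> [Hl _] x; have := Hl x 1 0 0; rewrite !scale1r addr0 => H.
by apply: (@addrI _ (phi x 0)); rewrite -H addr0.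
Qed.

Lemma ex_list (P : Obj R -> Obj R -> Prop)
  (H : forall x, exists s, forall y, P x y -> List.In y s) (S : seq (Obj R)) :
  exists s, forall x, List.In x S -> forall y, P x y -> List.In y s.
Proof.
elim: S => [|x S [s2 H2]]; first by exists [::].
have [s1 H1] := H x; exists (s1 ++ s2) => x' [<-|Hx] y Pxy; apply: List.in_or_app.
- by left; apply: H1.
- by right; apply: H2 Hx y Pxy.
Qed.

End Aux.

Theorem proposition3p6 (K : closedFieldType) (R : Kcat K)
  (HR : locally_bounded R) (X M N : Rmod R)
  (HM : fin_mod M) (HN : fin_mod N)
  (f : forall x, sp M x -> sp N x) (alpha : forall x, sp X x -> sp N x)
  (Hf : is_hom f) (Halpha : is_hom alpha)
  (Hsub : forall (L : Rmod R), fin_mod L ->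
     forall gamma : (forall x, sp L x -> sp X x), is_hom gamma ->
     exists h : (forall x, sp L x -> sp M x), is_hom h /\
       forall x (v : sp L x), alpha x (gamma x v) = f x (h x v)) :
  exists beta : (forall x, sp X x -> sp M x), is_hom beta /\
    forall x (v : sp X x), alpha x v = f x (beta x v).
Proof.
case: HM => sM HsM; case: HN => sN HsN.
case: HR => _ [_ [H3 H4]].
have [s3 Hs3] := ex_list H3 (sM ++ sN).
set T := (sM ++ sN) ++ s3.
have [s4 Hs4] := ex_list H4 T.
pose L := Lmod X T.
have finL : fin_mod L.
  exists s4 => z Hz.
  have : gens X T z != [::].
    apply: contra Hz => /eqP E.
    by rewrite /= dimsubvs /V E span_nil dimv0.
  by move/gens_nz => [t [Ht Hd]]; exact: Hs4 t Ht z Hd.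
have homg : is_hom (fun z (v : sp L z) => (vsval v : sp X z)).
  split; first by move=> x a v w; rewrite raddfD.
  by move=> x y g v; rewrite /= LvalE.
have [h [hh Hh]] := Hsub L finL _ homg.
have [hlin hnat] := hh.
exists (fun x v => h x (vsproj (V X T x) v)).
split; [split|].
- by move=> x a v w; rewrite linearP /= hlin.
- move=> x y g v.
  case: (boolP (\dim {: sp M x} == 0%N)) => [/eqP H0|HMx]; first exact: dim0_eq.
  have InS : List.In x (sM ++ sN) by apply List.in_or_app; left; exact: HsM.
  case: (boolP (\dim {: Defs.Hom R x y} == 0%N)) => [/eqP Hg|Hg].
    have -> : g = 0 by apply: dim0_eq.
    rewrite (@act0g _ R X x y v) linear0 (hom0 hh).
    by rewrite (@act0g _ R M x y (h y (vsproj (V X T y) v))).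
  have InT : List.In y T by apply List.in_or_app; right; exact: Hs3 x InS y Hg.
  rewrite -hnat; congr (h x _); apply: subvs_inj.
  rewrite /= LvalE vsprojK ?vsprojK //; first exact: V_full.
  by apply: V_closed; exact: V_full.
- move=> x v.
  case: (boolP (\dim {: sp N x} == 0%N)) => [/eqP H0|HNx]; first exact: dim0_eq.
  have InT : List.In x T.
    by apply List.in_or_app; left; apply List.in_or_app; right; exact: HsN.
  rewrite -Hh /=; congr (alpha x _); by rewrite vsprojK // V_full.
Qed.
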